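(* Fix $n\ge1$, $\tau>0$, $\beta\in(0,1)$ and use the notation of the context, with $\bar r=\sqrt{R^2-s^2}$. For $x\in\mathbb{R}^n$ with $|x|\le\beta R$ and $r\in(R-s,R+s)$: \[ \cos\theta(x,r)=\frac{r^2+\bar r^2}{2Rr},\qquad \partial_r\theta(x,r)=-\frac{1}{\sin\theta(x,r)}\cdot\frac{r^2-\bar r^2}{2Rr^2}. \] Moreover $h(x,\cdot)>0$ on $(R-s,R+s)$ and $h=0$ at $r=R\pm s$, and \[ \gamma'(\theta(x,r))\,\partial_r\theta(x,r)=-\frac{1+O(N^{-1})}{4\sqrt{\pi\tau}\,r^2}\,(r^2-\bar r^2)\Big(1-\frac{(r^2+\bar r^2)^2}{8N\tau r^2}\Big)^{\frac{N-3}{2}}, \] where $\gamma'$ is the derivative of $\gamma$ in $\theta$ and $O(N^{-1})$ is bounded by a constant times $N^{-1}$ independent of $N$.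
   Context: For $N\ge3$: $R=\sqrt{2N\tau}$, $\bar y\in\mathbb{R}^N$ with $|\bar y|=R$; for $|x|\le\beta R$, $s=s(x)=\sqrt{\beta^2R^2-|x|^2}$. $\gamma(\theta)=\gamma(N,\theta)$ is the fraction of the volume of $S^{N-1}$ contained in a geodesic ball of radius $\theta\in[0,\pi]$. For $r\in[R-s,R+s]$, the part of the sphere $\{|y|=r\}\subset\mathbb{R}^N$ inside $B_s(\bar y)$ is a spherical cap centered at $r\bar y/R$; $\theta(x,r)$ is its angular radius. $h(x,r)=r\,\gamma(\theta(x,r))$. *)

(* Defs.v *)
From mathcomp Require Import all_boot all_order all_algebra.
From mathcomp Require Import all_classical all_reals all_analysis.
Set Implicit Arguments. Unset Strict Implicit. Unset Printing Implicit Defensive.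
Import Order.TTheory GRing.Theory Num.Theory.
Import numFieldNormedType.Exports.
Local Open Scope classical_set_scope.
Local Open Scope ring_scope.

Definition dotv (R : realType) (N : nat) (u v : 'rV[R]_N) : R :=
  \sum_(i < N) u ord0 i * v ord0 i.

Definition enorm (R : realType) (N : nat) (u : 'rV[R]_N) : R :=
  Num.sqrt (dotv u u).

Definition vangle (R : realType) (N : nat) (u v : 'rV[R]_N) : R :=
  acos (dotv u v / (enorm u * enorm v)).

Definition Rad (R : realType) (N : nat) (tau : R) : R :=
  Num.sqrt (2 * N%:R * tau).

Definition s_of_x (R : realType) (n : nat) (beta Rr : R) (x : 'rV[R]_n) : R :=
  Num.sqrt (beta ^+ 2 * Rr ^+ 2 - enorm x ^+ 2).

Definition sphere_cap (R : realType) (N : nat) (ybar : 'rV[R]_N) (s r : R)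
  : set 'rV[R]_N :=
  [set y | enorm y = r /\ enorm (y - ybar) <= s].

Definition cap_theta (R : realType) (N : nat) (ybar : 'rV[R]_N) (s r : R) : R :=
  sup [set vangle y ((r / enorm ybar) *: ybar) | y in sphere_cap ybar s r].

(* gamma(N, theta): fraction of the volume (surface measure) of S^{N-1}
   contained in a geodesic ball of radius theta in [0, pi]:
   int_0^theta sin^{N-2} / int_0^pi sin^{N-2}. *)
Definition gammaS (R : realType) (N : nat) (th : R) : R :=
  (\int[lebesgue_measure]_(t in `[0, th]) (sin t ^+ (N - 2)%N)) /
  (\int[lebesgue_measure]_(t in `[0, pi]) (sin t ^+ (N - 2)%N)).

Definition h_of (R : realType) (N : nat) (ybar : 'rV[R]_N) (s r : R) : R :=
  r * gammaS N (cap_theta ybar s r).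

(* Main.v *)
Require Import Defs.
From mathcomp Require Import all_boot all_order all_algebra.
From mathcomp Require Import all_classical all_reals all_analysis.
From mathcomp Require Import lra ring.
Import Order.TTheory GRing.Theory Num.Theory.
Import numFieldNormedType.Exports.
Local Open Scope classical_set_scope.
Local Open Scope ring_scope.
Ltac side := repeat (apply/andP; split); rewrite ?pnatr_eq0 //.

Section Geom.
Context {R : realType}.
Variable N : nat.
Implicit Types u v w : 'rV[R]_N.

Lemma dotvC u v : dotv u v = dotv v u.
Proof. by apply: eq_bigr => i _; rewrite mulrC. Qed.

Lemma dotvDl u v w : dotv (u + v) w = dotv u w + dotv v w.
Proof. by rewrite /dotv -big_split; apply: eq_bigr => i _; rewrite mxE mulrDl. Qed.

Lemma dotvZl (a : R) u w : dotv (a *: u) w = a * dotv u w.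
Proof. by rewrite /dotv mulr_sumr; apply: eq_bigr => i _; rewrite mxE mulrA. Qed.

Lemma dotvNl u w : dotv (- u) w = - dotv u w.
Proof. by rewrite /dotv -sumrN; apply: eq_bigr => i _; rewrite mxE mulNr. Qed.

Lemma dotvBl u v w : dotv (u - v) w = dotv u w - dotv v w.
Proof. by rewrite dotvDl dotvNl. Qed.

Lemma dotvDr u v w : dotv w (u + v) = dotv w u + dotv w v.
Proof. by rewrite dotvC dotvDl !(dotvC w). Qed.

Lemma dotvZr (a : R) u w : dotv w (a *: u) = a * dotv w u.
Proof. by rewrite dotvC dotvZl dotvC. Qed.

Lemma dotvBr u v w : dotv w (u - v) = dotv w u - dotv w v.
Proof. by rewrite dotvC dotvBl !(dotvC w). Qed.

Lemma dotv_ge0 u : 0 <= dotv u u.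
Proof. by apply: sumr_ge0 => i _; rewrite -expr2 sqr_ge0. Qed.

Lemma enorm_ge0 u : 0 <= enorm u.
Proof. exact: sqrtr_ge0. Qed.

Lemma enorm_sq u : enorm u ^+ 2 = dotv u u.
Proof. by rewrite /enorm sqr_sqrtr // dotv_ge0. Qed.

Lemma sum_two (f : 'I_N -> R) i j : i != j ->
  (forall k, k != i -> k != j -> f k = 0) -> \sum_k f k = f i + f j.
Proof.
move=> ij f0; rewrite (bigD1 i) //= (bigD1 j) //=; last by rewrite eq_sym.
rewrite big1 ?addr0 // => k /andP[ki kj]; exact: f0.
Qed.

Lemma exists_vec (yb : 'rV[R]_N) (RR r d : R) : (2 <= N)%N ->
  dotv yb yb = RR ^+ 2 -> 0 < RR -> d ^+ 2 <= r ^+ 2 * RR ^+ 2 ->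
  exists y, dotv y y = r ^+ 2 /\ dotv y yb = d.
Proof.
move=> N2 ybR RR0 dr.
have [i yi] : exists i, yb 0 i != 0.
  case: (pickP (fun i => yb 0 i != 0)) => [i hi|h]; first by exists i.
  exfalso; have : dotv yb yb = 0.
    by apply: big1 => k _; move: (h k) => /negbFE/eqP ->; rewrite mulr0.
  by rewrite ybR => /eqP; rewrite sqrf_eq0 gt_eqF.
have [j ji] : exists j : 'I_N, j != i.
  have h0 : (0 < N)%N by case: N N2 => [|[|]].
  have h1 : (1 < N)%N by [].
  case: (eqVneq i (Ordinal h0)) => [->|ne]; last by exists (Ordinal h0); rewrite eq_sym.
  by exists (Ordinal h1); apply/eqP => -[].
pose w : 'rV[R]_N := \row_k (if k == i then yb 0 j else if k == j then - yb 0 i else 0).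
have dw : forall v, dotv w v = yb 0 j * v 0 i - yb 0 i * v 0 j.
  move=> v; rewrite /dotv (@sum_two _ i j); last 2 first.
  - by rewrite eq_sym.
  - by move=> k ki kj; rewrite mxE (negbTE ki) (negbTE kj) mul0r.
  by rewrite /w !mxE eqxx (negbTE ji) eqxx mulNr.
have wyb : dotv w yb = 0 by rewrite dw mulrC subrr.
have ww : 0 < dotv w w.
  rewrite dw !mxE eqxx (negbTE ji) eqxx.
  rewrite mulrN opprK -!expr2; apply: ltr_wpDl; first exact: sqr_ge0.
  by rewrite lt_def sqrf_eq0 yi sqr_ge0.
pose a := d / RR ^+ 2.
pose b := Num.sqrt ((r ^+ 2 - a ^+ 2 * RR ^+ 2) / dotv w w).
have RR2 : RR ^+ 2 != 0 by rewrite sqrf_eq0 gt_eqF.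
have hb : 0 <= (r ^+ 2 - a ^+ 2 * RR ^+ 2) / dotv w w.
  apply: divr_ge0; last exact: ltW.
  have e : a ^+ 2 * RR ^+ 2 = d ^+ 2 / RR ^+ 2.
    by rewrite /a; field; rewrite gt_eqF.
  by rewrite subr_ge0 e ler_pdivrMr ?exprn_gt0.
exists (a *: yb + b *: w); split.
  rewrite !dotvDl !dotvDr !dotvZl !dotvZr wyb (dotvC yb w) wyb ybR.
  transitivity (a ^+ 2 * RR ^+ 2 + b ^+ 2 * dotv w w); first by ring.
  by rewrite /b sqr_sqrtr // divfK ?gt_eqF //; ring.
rewrite dotvDl !dotvZl wyb ybR mulr0 addr0 /a divfK //.
Qed.

Lemma acos_le (a b : R) : -1 <= a -> a <= b -> b <= 1 -> acos b <= acos a.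
Proof.
move=> a1 ab b1.
have ia : acos a \in `[0, pi] by rewrite in_itv /= acos_ge0 ?acos_lepi ?a1 ?(le_trans ab b1).
have ib : acos b \in `[0, pi] by rewrite in_itv /= acos_ge0 ?acos_lepi ?b1 ?(le_trans a1 ab).
rewrite leNgt; apply/negP => H.
have := ltr_cos ia ib; rewrite H.
rewrite !acosK ?in_itv /= ?a1 ?b1 ?(le_trans ab b1) ?(le_trans a1 ab) //.
by rewrite ltNge ab.
Qed.

Lemma enorm_le (v : 'rV[R]_N) (s : R) : 0 <= s -> (enorm v <= s) = (dotv v v <= s ^+ 2).
Proof. by move=> s0; rewrite /enorm -{1}(ger0_norm s0) -sqrtr_sqr ler_sqrt // sqr_ge0. Qed.

Lemma dist_sq (y yb : 'rV[R]_N) :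
  dotv (y - yb) (y - yb) = dotv y y - 2 * dotv y yb + dotv yb yb.
Proof. by rewrite !dotvBl !dotvBr (dotvC yb y); ring. Qed.

Lemma cs_le (y yb : 'rV[R]_N) (RR r : R) : dotv y y = r ^+ 2 ->
  dotv yb yb = RR ^+ 2 -> 0 < RR -> 0 < r -> dotv y yb <= RR * r.
Proof.
move=> hy hb RR0 r0.
have := dotv_ge0 (RR *: y - r *: yb).
rewrite !dotvBl !dotvBr !dotvZl !dotvZr hy hb (dotvC yb y) => h.
have : 0 <= (2 * RR * r) * (RR * r - dotv y yb).
  by apply: (le_trans h); rewrite le_eqVlt; apply/orP; left; apply/eqP; ring.
by rewrite pmulr_rge0 ?subr_ge0 // !mulr_gt0.
Qed.

Lemma cap_theta_eq (yb : 'rV[R]_N) (RR s r : R) : (2 <= N)%N -> enorm yb = RR ->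
  0 < RR -> 0 <= s -> s <= RR -> 0 < r -> (r - RR) ^+ 2 <= s ^+ 2 ->
  cap_theta yb s r = acos ((r ^+ 2 + RR ^+ 2 - s ^+ 2) / (2 * RR * r)).
Proof.
move=> N2 ybR RR0 s0 sRR r0 rs.
have hb : dotv yb yb = RR ^+ 2 by rewrite -enorm_sq ybR.
have RRn : RR != 0 by rewrite gt_eqF.
have rn : r != 0 by rewrite gt_eqF.
set u0 := _ / _.
have ang : forall y, enorm y = r ->
    vangle y ((r / enorm yb) *: yb) = acos (dotv y yb / (RR * r)).
  move=> y yr; rewrite /vangle; congr acos.
  have ec : enorm ((r / enorm yb) *: yb) = r.
    rewrite ybR /enorm dotvZl dotvZr hb.
    have -> : r / RR * (r / RR * RR ^+ 2) = r ^+ 2 by field; side.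
    by rewrite sqrtr_sqr ger0_norm // ltW.
  by rewrite ec yr dotvZr ybR; field; side.
have q2 : 0 < 2 * RR * r by rewrite !mulr_gt0.
have u0l : -1 <= u0.
  rewrite /u0 ler_pdivlMr //.
  have : s * s <= (r + RR) * (r + RR) by apply: ler_pM => //; lra.
  by rewrite expr2 in rs *; nra.
have u0r : u0 <= 1.
  rewrite /u0 ler_pdivrMr //.
  by rewrite !expr2 in rs *; nra.
pose E := [set vangle y ((r / enorm yb) *: yb) | y in sphere_cap yb s r].
have Eu : E (acos u0).
  pose d := (r ^+ 2 + RR ^+ 2 - s ^+ 2) / 2.
  have hd : d ^+ 2 <= r ^+ 2 * RR ^+ 2.
    have -> : d ^+ 2 = u0 ^+ 2 * (r ^+ 2 * RR ^+ 2) by rewrite /d /u0; field; side.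
    apply: ler_piMl; first by rewrite mulr_ge0 // sqr_ge0.
    by rewrite expr2; nra.
  have [y0 [y0y y0b]] := @exists_vec yb RR r d N2 hb RR0 hd.
  have ey0 : enorm y0 = r by rewrite /enorm y0y sqrtr_sqr ger0_norm // ltW.
  exists y0.
    split => //; rewrite enorm_le // dist_sq y0y y0b hb /d.
    by rewrite le_eqVlt; apply/orP; left; apply/eqP; field; side.
  by rewrite ang // y0b /d /u0; congr acos; field; side.
have ubE : ubound E (acos u0).
  move=> _ [y [yr ys] <-]; rewrite ang //.
  have yy : dotv y y = r ^+ 2 by rewrite -enorm_sq yr.
  have D1 := @cs_le y yb RR r yy hb RR0 r0.
  move: ys; rewrite enorm_le // dist_sq yy hb => ys.
  apply: acos_le => //.
  - rewrite /u0.
    have -> : (r ^+ 2 + RR ^+ 2 - s ^+ 2) / (2 * RR * r) =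
       ((r ^+ 2 + RR ^+ 2 - s ^+ 2) / 2) / (RR * r) by field; side.
    apply: ler_wpM2r; first by rewrite invr_ge0 mulr_ge0 // ltW.
    lra.
  - by rewrite ler_pdivrMr ?mulr_gt0 // mul1r.
apply/eqP; rewrite eq_le; apply/andP; split.
  by apply: ge_sup => //; exists (acos u0).
by apply: ub_le_sup => //; exists (acos u0).
Qed.
End Geom.

Section Wallis.
Context {R : realType}.
Notation mu := (@lebesgue_measure R).

Lemma cont_sinX m : continuous (fun t : R => sin t ^+ m).
Proof.
move=> x; apply: (@continuous_comp _ _ _ (@sin R) (fun u => u ^+ m)).
  exact: continuous_sin.
exact: exprn_continuous.
Qed.

Lemma int_cont (f : R -> R) (a b : R) : continuous f ->
  mu.-integrable `[a, b] (EFin \o f).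
Proof.
move=> cf; apply: continuous_compact_integrable; first exact: segment_compact.
exact: continuous_subspaceT.
Qed.

Lemma cont_cM (c : R) (g : R -> R) : continuous g -> continuous (fun t => c * g t).
Proof.
move=> cg x; apply: (continuousM (s:=cst c) (t:=g)); [exact: cst_continuous | exact: cg].
Qed.

Lemma cont_B (f g : R -> R) : continuous f -> continuous g -> continuous (fun t => f t - g t).
Proof. by move=> cf cg x; apply: (continuousB (f:=f) (g:=g)); [exact: cf|exact: cg]. Qed.

Definition W (m : nat) : R := \int[mu]_(t in `[0, pi]) (sin t ^+ m).

Lemma ftc2 (f F : R -> R) (a b : R) : a < b -> continuous f ->
  (forall x : R, is_derive x (1:R) F (f x)) ->
  \int[mu]_(x in `[a, b]) f x = F b - F a.
Proof.
move=> ab cf dF.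
have cF : continuous F.
  move=> x; have [d _] := dF x.
  by apply: differentiable_continuous; apply/derivable1_diffP.
have h : (\int[mu]_(x in `[a, b]) (f x)%:E = (F b)%:E - (F a)%:E)%E.
  apply: continuous_FTC2 => //.
  - exact: continuous_subspaceT.
  - split.
    + by move=> x _; have [] := dF x.
    + exact: cvg_at_right_filter (cF a).
    + exact: cvg_at_left_filter (cF b).
  - by move=> x _; rewrite derive1E; apply: derive_val.
by rewrite /Rintegral h.
Qed.

Lemma W_rec m : (m.+1)%:R * W m = (m.+2)%:R * W m.+2.
Proof.
pose F := (@sin R ^+ m.+1 * @cos R).
have dF : forall x : R, is_derive x (1:R) F
    ((m.+1)%:R * sin x ^+ m - (m.+2)%:R * sin x ^+ m.+2).
  move=> x; rewrite /F; apply: is_derive_eq.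
  rewrite !exprfctE /=.
  have sc : forall a b : R, a *: b = a * b by [].
  rewrite !sc !exprS.
  have h := cos2sin2 x; rewrite !expr2 in h.
  transitivity ((m.+1)%:R * sin x ^+ m * (cos x * cos x) - sin x * sin x * sin x ^+ m * (1:R)).
    by ring.
  rewrite h; ring.
have ci : forall k, mu.-integrable `[0, pi] (EFin \o (fun t : R => sin t ^+ k)).
  by move=> k; apply: int_cont; exact: cont_sinX.
have ciZ : forall (c : R) k, mu.-integrable `[0, pi] (EFin \o (fun t : R => c * sin t ^+ k)).
  by move=> c k; apply: int_cont; apply: cont_cM; exact: cont_sinX.
have cf : continuous (fun x : R => m.+1%:R * sin x ^+ m - m.+2%:R * sin x ^+ m.+2).
  by apply: cont_B; apply: cont_cM; exact: cont_sinX.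
have := @ftc2 _ F 0 pi (pi_gt0 R) cf dF.
rewrite RintegralB // !RintegralZl // /F !exprfctE /= !mulrfctE sinpi sin0 !expr0n /= !mul0r subr0.
by move/eqP; rewrite subr_eq0 => /eqP.
Qed.

Lemma W_ge0 m : 0 <= W m.
Proof.
apply: Rintegral_ge0 => x; rewrite /= in_itv /= => /andP[x0 xpi].
by apply: exprn_ge0; apply: sin_ge0_pi; rewrite x0 xpi.
Qed.

Lemma W_decr m : W m.+1 <= W m.
Proof.
apply: le_Rintegral => //; try (apply: int_cont; exact: cont_sinX).
move=> x; rewrite /= in_itv /= => /andP[x0 xpi].
have s0 : 0 <= sin x by apply: sin_ge0_pi; rewrite x0 xpi.
rewrite exprSr; apply: ler_piMr; first exact: exprn_ge0.
exact: sin_le1.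
Qed.

Lemma W0 : W 0 = pi.
Proof.
rewrite /W; under eq_Rintegral do rewrite expr0.
rewrite Rintegral_cst //.
rewrite [X in fine X]lebesgue_measure_itv /= lte_fin (pi_gt0 R) /=.
by rewrite subr0 mul1r.
Qed.

Lemma W1 : W 1 = 2.
Proof.
rewrite /W; under eq_Rintegral do rewrite expr1.
have dF : forall x : R, is_derive x (1:R) (- @cos R) (sin x).
  by move=> x; apply: is_derive_eq; rewrite opprK.
rewrite (@ftc2 _ (- @cos R) 0 pi (pi_gt0 R) (@continuous_sin R) dF) /=.
by rewrite !opprfctE cospi cos0; lra.
Qed.

Lemma W_prod m : (m.+1)%:R * W m * W m.+1 = 2 * pi.
Proof.
elim: m => [|m IH]; first by rewrite W0 W1 mul1r mulrC.
rewrite -IH.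
transitivity (W m.+1 * ((m.+2)%:R * W m.+2)); first by ring.
rewrite -W_rec; ring.
Qed.

Lemma W_low k : 2 * pi <= (k.+2)%:R * W k.+1 ^+ 2.
Proof.
rewrite -(W_prod k.+1) expr2 -mulrA ler_pM2l ?ltr0n //.
by apply: ler_wpM2l; [exact: W_ge0 | exact: W_decr].
Qed.

Lemma W_up k : (k.+1)%:R * W k.+1 ^+ 2 <= 2 * pi.
Proof.
rewrite -(W_prod k) expr2 -!mulrA ler_pM2l ?ltr0n //.
by apply: ler_wpM2r; [exact: W_ge0 | exact: W_decr].
Qed.

Definition G (m : nat) (th : R) : R := \int[mu]_(t in `[0, th]) (sin t ^+ m).

Lemma gammaS_G N th : gammaS N th = G (N - 2) th / W (N - 2).
Proof. by []. Qed.

Lemma G0 m : G m 0 = 0.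
Proof. by rewrite /G set_itv1 Rintegral_set1. Qed.

Lemma W_gt0 m : 0 < W m.
Proof.
rewrite lt_def W_ge0 andbT; apply/eqP => h.
have := W_prod m; rewrite h mulr0 mul0r => /eqP.
by rewrite eq_sym mulf_eq0 pnatr_eq0 /= gt_eqF // pi_gt0.
Qed.

Lemma G_pos m th : 0 < th < pi -> 0 < G m th.
Proof.
move=> /andP[th0 thpi].
pose F := (m.+1%:R)^-1 *: (@sin R ^+ m.+1).
have dF : forall x : R, is_derive x (1:R) F (sin x ^+ m * cos x).
  move=> x; rewrite /F; apply: is_derive_eq.
  have sc : forall a b : R, a *: b = a * b by [].
  by rewrite !sc /= mulrA mulrA mulVf ?pnatr_eq0 // mul1r.
have cf : continuous (fun x : R => sin x ^+ m * cos x).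
  move=> y; apply: (continuousM (s:=fun x => sin x ^+ m) (t:=cos)).
    exact: cont_sinX.
  exact: continuous_cos.
have := @ftc2 _ F 0 th th0 cf dF.
rewrite /F !scalrfctE !exprfctE /= sin0 expr0n /= scaler0 subr0 => h.
have : 0 < (m.+1%:R)^-1 *: sin th ^+ m.+1.
  apply: mulr_gt0; first by rewrite invr_gt0 ltr0n.
  by apply: exprn_gt0; apply: sin_gt0_pi; rewrite th0 thpi.
rewrite -h => /lt_le_trans; apply.
apply: le_Rintegral => //; try (apply: int_cont => //; exact: cont_sinX).
move=> x; rewrite /= in_itv /= => /andP[x0 xth].
apply: ler_piMr; last exact: cos_le1.
apply: exprn_ge0; apply: sin_ge0_pi; rewrite x0 /=.
exact: le_trans xth (ltW thpi).
Qed.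

Lemma G_deriv m (th : R) : 0 < th -> is_derive th (1:R) (G m) (sin th ^+ m).
Proof.
move=> th0.
have := @continuous_FTC1_closed R (fun t => sin t ^+ m) 0 th (th + 1).
case.
- by rewrite ltrDl.
- by apply: int_cont; exact: cont_sinX.
- exact: th0.
- exact: cont_sinX.
move=> d e; apply: DeriveDef; first exact: d.
by rewrite -derive1E; exact: e.
Qed.

Lemma gamma_deriv N (th : R) : 0 < th ->
  is_derive th (1:R) (gammaS N) (sin th ^+ (N - 2) / W (N - 2)).
Proof.
move=> th0.
have -> : gammaS N = G (N - 2) * cst (W (N - 2))^-1 by apply/funext.
have := is_deriveM (@G_deriv (N - 2) th th0) (is_derive_cst (W (N - 2))^-1 th 1).
move/is_derive_eq; apply.
by rewrite scaler0 add0r /= mulrC.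
Qed.
End Wallis.

Section Main.
Context {R : realType}.

Lemma u_deriv (c RR y : R) : y != 0 -> RR != 0 ->
  is_derive y (1:R) (fun z : R => (z ^+ 2 + c) / (2 * RR * z))
    ((y ^+ 2 - c) / (2 * RR * y ^+ 2)).
Proof.
move=> y0 RR0.
pose k1 := (2 * RR)^-1; pose k2 := c / (2 * RR).
have -> : (fun z : R => (z ^+ 2 + c) / (2 * RR * z)) =
    k1 *: (@id R) + k2 *: (fun z : R => z^-1).
  apply/funext => z; rewrite /k1 /k2 /=.
  have sc : forall a b : R, a *: b = a * b by [].
  rewrite addrfctE !scalrfctE /= !sc; case: (eqVneq z 0) => [->|zn].
    by rewrite !mulr0 !invr0 !mulr0 addr0.
  by field; side.
have d1 : is_derive y (1:R) (k1 *: (@id R)) (k1 *: 1).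
  exact: is_deriveZ.
have d2 : is_derive y (1:R) (k2 *: (fun z : R => z^-1)) (k2 *: (- y ^- 2 *: 1)).
  apply: is_deriveZ; exact: (@is_deriveV _ id).
have := is_deriveD d1 d2; move/is_derive_eq; apply.
have sc : forall a b : R, a *: b = a * b by [].
by rewrite !sc /k1 /k2; field; side.
Qed.


Lemma th_eq N (yb : 'rV[R]_N) (RR s rb r : R) : (2 <= N)%N -> enorm yb = RR ->
  0 < RR -> 0 <= s -> s < RR -> rb ^+ 2 = RR ^+ 2 - s ^+ 2 ->
  RR - s <= r <= RR + s ->
  cap_theta yb s r = acos ((r ^+ 2 + rb ^+ 2) / (2 * RR * r)).
Proof.
move=> N2 ybR RR0 s0 sRR rb2 /andP[r1 r2].
rewrite (@cap_theta_eq R N yb RR s r) //; last 3 first.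
- exact: ltW.
- lra.
- have h1 : 0 <= s - (r - RR) by lra.
  have h2 : 0 <= s + (r - RR) by lra.
  have := mulr_ge0 h1 h2; rewrite !expr2; nra.
by rewrite rb2 addrA.
Qed.

Lemma th_core N (yb : 'rV[R]_N) (RR s rb r : R) : (2 <= N)%N -> enorm yb = RR ->
  0 < RR -> 0 <= s -> s < RR -> rb ^+ 2 = RR ^+ 2 - s ^+ 2 ->
  RR - s < r < RR + s ->
  let u := (r ^+ 2 + rb ^+ 2) / (2 * RR * r) in
  [/\ -1 < u < 1, cap_theta yb s r = acos u &
    is_derive r (1:R) (cap_theta yb s)
      (- (sin (cap_theta yb s r))^-1 * ((r ^+ 2 - rb ^+ 2) / (2 * RR * r ^+ 2)))].
Proof.
move=> N2 ybR RR0 s0 sRR rb2 /andP[r1 r2] u.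
have r0 : 0 < r by lra.
have q0 : 0 < 2 * RR * r by rewrite !mulr_gt0.
have ub : -1 < u < 1.
  apply/andP; split; rewrite /u.
    rewrite ltr_pdivlMr //.
    have := sqr_ge0 rb; have := sqr_ge0 r; nra.
  rewrite ltr_pdivrMr // mul1r rb2.
  have h1 : 0 < s - (r - RR) by lra.
  have h2 : 0 < s + (r - RR) by lra.
  have := mulr_gt0 h1 h2; rewrite !expr2; nra.
have the : forall z, RR - s < z < RR + s ->
    cap_theta yb s z = acos ((z ^+ 2 + rb ^+ 2) / (2 * RR * z)).
  move=> z /andP[z1 z2]; apply: (@th_eq N) => //.
  by apply/andP; split; apply: ltW.
split => //; first by apply: the; rewrite r1 r2.
pose uf := fun z : R => (z ^+ 2 + rb ^+ 2) / (2 * RR * z).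
have du := @u_deriv (rb ^+ 2) RR r (lt0r_neq0 r0) (lt0r_neq0 RR0).
have da := is_derive1_acos ub.
have dc := @is_derive1_comp R acos uf r _ _ da du.
have rin : r \in `](RR - s), (RR + s)[ by rewrite in_itv /= r1 r2.
have /near_in_itvoo nr := rin.
have : is_derive r (1:R) (cap_theta yb s)
    (- (Num.sqrt (1 - u ^+ 2))^-1 * ((r ^+ 2 - rb ^+ 2) / (2 * RR * r ^+ 2))).
  apply: (near_eq_is_derive _ dc).
  near=> z.
  have : z \in `](RR - s), (RR + s)[ by near: z.
  rewrite in_itv /= => zi.
  by rewrite /= the.
have ub' : -1 <= u <= 1 by case/andP: ub => a b; rewrite !ltW.
by rewrite the ?r1 ?r2 // sin_acos.
Unshelve. all: by end_near.
Qed.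
End Main.

Theorem lemma4p4 (R : realType) (n : nat) (tau beta : R) :
  (1 <= n)%N -> 0 < tau -> 0 < beta < 1 ->
  exists C : R, forall (N : nat) (ybar : 'rV[R]_N) (x : 'rV[R]_n),
    (3 <= N)%N -> enorm ybar = Rad N tau -> enorm x <= beta * Rad N tau ->
    let RR := Rad N tau in
    let s := s_of_x beta RR x in
    let rb := Num.sqrt (RR ^+ 2 - s ^+ 2) in
    let th := cap_theta ybar s in
    (forall r : R, RR - s < r < RR + s ->
       cos (th r) = (r ^+ 2 + rb ^+ 2) / (2 * RR * r) /\
       derivable th r 1 /\
       derive1 th r = - (sin (th r))^-1 * ((r ^+ 2 - rb ^+ 2) / (2 * RR * r ^+ 2))) /\
    (forall r : R, RR - s < r < RR + s -> 0 < h_of ybar s r) /\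
    h_of ybar s (RR - s) = 0 /\ h_of ybar s (RR + s) = 0 /\
    (forall r : R, RR - s < r < RR + s ->
       derivable (gammaS N) (th r) 1 /\
       exists e : R, `|e| <= C / N%:R /\
         derive1 (gammaS N) (th r) * derive1 th r =
           - ((1 + e) / (4 * Num.sqrt (pi * tau) * r ^+ 2)) * (r ^+ 2 - rb ^+ 2)
             * powR (1 - (r ^+ 2 + rb ^+ 2) ^+ 2 / (8 * N%:R * tau * r ^+ 2))
                    ((N%:R - 3) / 2)).

Proof.
move=> n1 tau0 /andP[b0 b1].
exists 2 => N ybar x N3 ybR xle RR s rb th.
have [k Nk] : exists k, N = k.+3 by exists (N - 3)%N; rewrite -addn3 subnK.
subst N.
have N2 : (2 <= k.+3)%N by [].
have Npos : 0 < k.+3%:R :> R by rewrite ltr0n.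
have RR2 : RR ^+ 2 = 2 * k.+3%:R * tau.
  by rewrite /RR /Rad sqr_sqrtr // !mulr_ge0 // ltW.
have RR0 : 0 < RR by rewrite /RR /Rad sqrtr_gt0 !mulr_gt0.
have ex0 : 0 <= enorm x by apply: sqrtr_ge0.
have s2 : s ^+ 2 = beta ^+ 2 * RR ^+ 2 - enorm x ^+ 2.
  rewrite /s /s_of_x sqr_sqrtr // subr_ge0 -exprMn.
  by rewrite lerXn2r // ?nnegrE // mulr_ge0 // ltW.
have s0 : 0 <= s by apply: sqrtr_ge0.
have sRR : s < RR.
  have : s ^+ 2 < RR ^+ 2.
    rewrite s2.
    have : beta ^+ 2 * RR ^+ 2 < RR ^+ 2.
      rewrite gtr_pMl ?exprn_gt0 //.
      by rewrite expr2; nra.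
    have := sqr_ge0 (enorm x); lra.
  apply: contraTT; rewrite -!leNgt => h; rewrite !expr2.
  by apply: ler_pM => //; exact: ltW.
have rb2 : rb ^+ 2 = RR ^+ 2 - s ^+ 2.
  rewrite /rb sqr_sqrtr // subr_ge0.
  by rewrite lerXn2r // ?nnegrE // ltW.
have core := @th_core R k.+3 ybar RR s rb _ N2 ybR RR0 s0 sRR rb2.
split.
  move=> r hr; have [ub thr dth] := core r hr.
  have ub' : -1 <= (r ^+ 2 + rb ^+ 2) / (2 * RR * r) <= 1.
    by case/andP: ub => a b; rewrite !ltW.
  split; first by rewrite /th thr acosK // in_itv /=.
  split; first by rewrite /th; case: dth.
  by rewrite /th derive1E; case: dth.
split.
  move=> r hr; have [ub thr dth] := core r hr.
  case/andP: (ub) => ua ub1.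
  have r0 : 0 < r by case/andP: hr => a _; lra.
  rewrite /h_of thr gammaS_G; apply: mulr_gt0 => //.
  apply: divr_gt0; last exact: W_gt0.
  apply: G_pos; rewrite acos_gt0 ?acos_ltpi ?ltW //= ?ua ?ub1 ?(ltW ua) ?(ltW ub1) //.
have hend : forall r, r = RR - s \/ r = RR + s -> h_of ybar s r = 0.
    move=> r hr.
    have r0 : 0 < r by case: hr => ->; lra.
    rewrite /h_of (@th_eq R k.+3 ybar RR s rb r) //; last first.
      by case: hr => ->; apply/andP; split; lra.
    have e : r ^+ 2 + rb ^+ 2 = 2 * RR * r by rewrite rb2; case: hr => ->; ring.
    rewrite e divff ?acos1 ?gammaS_G ?G0 ?mul0r ?mulr0 //.
    by rewrite !mulf_neq0 // lt0r_neq0.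
split; first by apply: hend; left.
split; first by apply: hend; right.
move=> r hr; have [ub thr dth] := core r hr.
case/andP: (ub) => ua ub1.
have r0 : 0 < r by case/andP: hr => a _; lra.
have th0 : 0 < th r by rewrite /th thr acos_gt0 // (ltW ua) ub1.
have thpi : th r < pi by rewrite /th thr acos_ltpi // ua (ltW ub1).
have sn0 : 0 < sin (th r) by apply: sin_gt0_pi; rewrite th0 thpi.
have dg := @gamma_deriv R k.+3 (th r) th0.
split; first by case: dg.
have Wg := @W_gt0 R k.+1.
have pt0 : 0 < pi * tau by rewrite mulr_gt0 // pi_gt0.
have sq0 : 0 < Num.sqrt (pi * tau) by rewrite sqrtr_gt0.
pose p := 2 * Num.sqrt (pi * tau) / (RR * W k.+1).
exists (p - 1); split.
  have Wn : (W k.+1 : R) != 0 by apply: lt0r_neq0; exact: Wg.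
  have RRn : RR != 0 by apply: lt0r_neq0.
  have sqn : Num.sqrt (pi * tau) != 0 by apply: lt0r_neq0.
  have taun : tau != 0 by apply: lt0r_neq0.
  have p0 : 0 <= p by rewrite /p divr_ge0 ?mulr_ge0 // ltW.
  have pp : p ^+ 2 * (k.+3%:R * W k.+1 ^+ 2) = 2 * pi.
    rewrite /p expr_div_n exprMn sqr_sqrtr ?(ltW pt0) // exprMn RR2.
    by field; side.
  have A0 : 0 < (W k.+1 : R) ^+ 2 by rewrite exprn_gt0.
  have h1 : k.+1%:R <= p ^+ 2 * k.+3%:R.
    rewrite -(ler_pM2r A0) -mulrA pp; exact: W_up.
  have h2 : p ^+ 2 * k.+3%:R <= k.+2%:R.
    rewrite -(ler_pM2r A0) -mulrA pp; exact: W_low.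
  have K0 : 0 <= k%:R :> R by [].
  have e1 : k.+1%:R = k%:R + 1 :> R by rewrite -addn1 natrD.
  have e2 : k.+2%:R = k%:R + 2 :> R by rewrite -addn2 natrD.
  have e3 : k.+3%:R = k%:R + 3 :> R by rewrite -addn3 natrD.
  rewrite e3; rewrite e1 e3 in h1; rewrite e2 e3 in h2.
  have p1 : p <= 1.
    rewrite leNgt; apply/negP => hp.
    have : 1 < p ^+ 2 by rewrite expr2; nra.
    move=> hp2; have : (k%:R + 3) < p ^+ 2 * (k%:R + 3) by rewrite ltr_pMl //; lra.
    lra.
  rewrite ler0_norm ?subr_le0 // opprB ler_pdivlMr; last by lra.
  have H : 0 <= p * (1 - p) * (k%:R + 3).
    apply: mulr_ge0; last by lra.
    by apply: mulr_ge0 => //; rewrite subr_ge0.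
  have -> : (1 - p) * (k%:R + 3) =
    (k%:R + 3) - p ^+ 2 * (k%:R + 3) - p * (1 - p) * (k%:R + 3) by ring.
  move: H h1; set X := p ^+ 2 * _; set Y := p * _ * _; lra.
have Wn : (W k.+1 : R) != 0 by apply: lt0r_neq0; exact: Wg.
have RRn : RR != 0 by apply: lt0r_neq0.
have sqn : Num.sqrt (pi * tau) != 0 by apply: lt0r_neq0.
have rn : r != 0 by apply: lt0r_neq0.
have snn : sin (th r) != 0 by apply: lt0r_neq0.
have Nn : k.+3%:R != 0 :> R by apply: lt0r_neq0.
have taun : tau != 0 by apply: lt0r_neq0.
set u := (r ^+ 2 + rb ^+ 2) / (2 * RR * r) in ua ub1 thr.
have e1 : 1 - (r ^+ 2 + rb ^+ 2) ^+ 2 / (8 * k.+3%:R * tau * r ^+ 2) = 1 - u ^+ 2.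
  rewrite /u expr_div_n.
  have -> : 8 * k.+3%:R * tau * r ^+ 2 = (2 * RR * r) ^+ 2.
    by rewrite !exprMn RR2; ring.
  by [].
have e2 : ((k.+3)%:R - 3) / 2 = 2^-1 * k%:R :> R.
  by rewrite -addn3 natrD addrK mulrC.
have u2 : 0 <= 1 - u ^+ 2.
  rewrite subr_ge0 expr2; nra.
rewrite e1 e2 powRrM powR12_sqrt // powR_mulrn ?sqrtr_ge0 //.
rewrite -sin_acos; last by rewrite !ltW.
rewrite -thr -/(th r).
have -> : derive1 (gammaS k.+3) (th r) = sin (th r) ^+ k.+1 / W k.+1.
  by rewrite derive1E; case: dg.
have -> : derive1 th r = - (sin (th r))^-1 * ((r ^+ 2 - rb ^+ 2) / (2 * RR * r ^+ 2)).
  by rewrite /th derive1E; case: dth.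
rewrite /p exprS.
by field; side.
Qed.
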